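(* Let $n\ge4$ and let $\lambda=(a_1,\dots,a_n)$ (usual coordinates) be a dominant weight of $SL(n)$ all of whose coordinates $a_i$ are non-integers. If the collection $a_1,\dots,a_n$ takes at least three distinct values, then $M(\lambda)$ contains a point three of whose coordinates are equal to $\alpha+1,\alpha,\alpha-1$ for some $\alpha\in\mathbb R$.
   Context: Setup for $SL(n)$: $\varepsilon_1,\dots,\varepsilon_n$ is the standard basis of $\mathbb Q^n$, $e_i=\varepsilon_i-\frac1n(1,\dots,1)$; the character lattice $\mathfrak X(T)$ of the diagonal torus is identified with the $\mathbb Z$-span of $e_1,\dots,e_n$ inside $\{y\in\mathbb Q^n:\sum y_i=0\}$ (the $y_i$ are the ''usual coordinates''). $W=S_n$ acts by permuting coordinates. A weight is dominant if $y_1\ge y_2\ge\dots\ge y_n$. The root lattice is $\Phi=\{\sum a_ie_i\mid a_i\in\mathbb Z,\ \sum a_i\equiv0\pmod n\}$. For a dominant weight $\lambda$, $M(\lambda)=\mathrm{conv}\{w\lambda\mid w\in W\}\cap(\lambda+\Phi)$. *)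

(* Defs.v *)
(* Weights of SL(n) as row vectors in Q^n ("usual coordinates"). *)
From HB Require Import structures.
From mathcomp Require Import all_boot all_order all_algebra all_fingroup.
Set Implicit Arguments. Unset Strict Implicit. Unset Printing Implicit Defensive.
Import Order.TTheory GRing.Theory Num.Theory.
Local Open Scope ring_scope.

Definition e_vec (n : nat) (i : 'I_n) : 'rV[rat]_n :=
  \row_j ((i == j)%:R - (n%:R)^-1).

Definition char_lattice (n : nat) (y : 'rV[rat]_n) : Prop :=
  exists a : 'I_n -> int, y = \sum_i (a i)%:~R *: e_vec i.

Definition root_lattice (n : nat) (y : 'rV[rat]_n) : Prop :=
  exists a : 'I_n -> int, (n%:Z %| \sum_i a i)%Z /\ y = \sum_i (a i)%:~R *: e_vec i.

Definition dominant (n : nat) (y : 'rV[rat]_n) : Prop :=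
  forall i j : 'I_n, (i <= j)%N -> y 0 j <= y 0 i.

Definition Wact (n : nat) (s : 'S_n) (y : 'rV[rat]_n) : 'rV[rat]_n :=
  \row_j y 0 (s^-1 j)%g.

Definition in_conv_orbit (n : nat) (lam x : 'rV[rat]_n) : Prop :=
  exists t : 'S_n -> rat, (forall s, 0 <= t s) /\ \sum_s t s = 1 /\
    x = \sum_s t s *: Wact s lam.

Definition M_set (n : nat) (lam x : 'rV[rat]_n) : Prop :=
  in_conv_orbit lam x /\ root_lattice (x - lam).

(* Main.v *)
Require Import Defs.
From Stdlib Require Import Ring.
From HB Require Import structures.
From mathcomp Require Import all_boot all_order all_algebra all_fingroup.
Import Order.TTheory GRing.Theory Num.Theory.
Set Implicit Arguments. Unset Strict Implicit.
Local Open Scope ring_scope.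
Lemma rat_rt : @ring_theory rat zeroq oneq addq mulq (fun x y => addq x (oppq y)) oppq (@eq rat).
Proof.
split=> //.
- exact: (@add0r rat). - exact: (@addrC rat). - exact: (@addrA rat). - exact: (@mul1r rat). - exact: (@mulrC rat).
- exact: (@mulrA rat). - exact: (@mulrDl rat). - exact: (@subrr rat).
Qed.
Add Ring ratring : rat_rt.
Ltac ratify := repeat match goal with
 | |- context [@Algebra.add ?I ?x ?y] => change (@Algebra.add I x y) with (addq x y)
 | |- context [@Algebra.opp ?I ?x] => change (@Algebra.opp I x) with (oppq x)
 | |- context [@GRing.mul ?I ?x ?y] => change (@GRing.mul I x y) with (mulq x y)
 | |- context [@GRing.one ?I] => change (@GRing.one I) with oneq
 | |- context [@Algebra.zero ?I] => change (@Algebra.zero I) with zeroq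
 end.
Ltac rring := ratify; match goal with |- ?x = ?y => change (@eq rat x y) end; ring.

Definition hullc (n : nat) (lam x : 'rV[rat]_n) : Prop :=
  exists t : 'S_n -> rat, [/\ forall s, 0 <= t s, \sum_s t s = 1 &
    forall j, x 0 j = \sum_s t s * lam 0 ((s^-1)%g j)].

Lemma hullc_conv n (lam x : 'rV[rat]_n) : hullc lam x -> in_conv_orbit lam x.
Proof.
case=> t [t0 t1 tx]; exists t; split=> //; split=> //.
apply/rowP=> j; rewrite summxE tx; apply: eq_bigr => s _.
by rewrite !mxE.
Qed.

Lemma hullc_lam n (lam : 'rV[rat]_n) : hullc lam lam.
Proof.
exists (fun s => (s == 1%g)%:R); split.
- by move=> s; case: (s == 1%g).
- rewrite (bigD1 1%g) //= eqxx big1 ?addr0 // => s /negbTE ->; by [].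
- move=> j; rewrite (bigD1 1%g) //= eqxx big1 ?addr0 ?invg1 ?perm1 ?mul1r //.
  by move=> s /negbTE ->; rewrite mul0r.
Qed.

Lemma mixL (a b s : rat) : (1-s)*a + s*b = a - s*(a-b).
Proof. by rewrite mulrBl mul1r mulrBr opprB addrA [_ - _ + _]addrAC. Qed.
Lemma mixR (a b s : rat) : (1-s)*b + s*a = b + s*(a-b).
Proof. by rewrite mulrBl mul1r mulrBr addrAC -addrA. Qed.

Definition upd n (x : 'rV[rat]_n) (p q : 'I_n) (c : rat) : 'rV[rat]_n :=
  \row_j (if j == p then c else if j == q then x 0 p + x 0 q - c else x 0 j).

Lemma hullc_upd n (lam x : 'rV[rat]_n) p q c :
  hullc lam x -> p != q -> x 0 q <= c <= x 0 p -> hullc lam (upd x p q c).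
Proof.
move=> [t [t0 t1 tx]] pq /andP[hq hp].
have [e|ne] := eqVneq (x 0 p) (x 0 q).
  have ec : c = x 0 p by apply/eqP; rewrite eq_le hp e hq.
  exists t; split=> // j; rewrite mxE -tx.
  case: eqP => [->|_]; first by rewrite ec.
  case: eqP => [->|_] //; by rewrite ec addrAC subrr add0r.
set d := x 0 p - x 0 q.
have d0 : 0 < d by rewrite subr_gt0 lt_neqAle eq_sym ne (le_trans hq hp).
set s := (x 0 p - c) / d.
have s0 : 0 <= s by apply: divr_ge0; [rewrite subr_ge0 | apply: ltW].
have s1 : 1 - s >= 0.
  by rewrite subr_ge0 /s ler_pdivrMr // mul1r /d lerD2l lerN2.
have sd : s * d = x 0 p - c by rewrite /s divfK // lt0r_neq0.
clearbody s.
set tau := tperm p q.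
exists (fun u => (1 - s) * t u + s * t (u * tau)%g); split.
- by move=> u; rewrite addr_ge0 // mulr_ge0.
- rewrite big_split /= -!mulr_sumr t1 (reindex_inj (mulIg tau)) /=.
  under eq_bigr do rewrite -mulgA tperm2 mulg1.
  by rewrite t1 !mulr1 subrK.
have key : forall j, \sum_u t (u * tau)%g * lam 0 ((u^-1)%g j) = x 0 (tau j).
  move=> j; rewrite tx (reindex_inj (mulIg tau)) /=.
  apply: eq_bigr => u _; rewrite -mulgA tperm2 mulg1; congr (_ * lam 0 _).
  by rewrite invMg permM tpermV.
move=> j; rewrite mxE.
under eq_bigr do rewrite mulrDl -!mulrA.
rewrite big_split /= -!mulr_sumr -tx key.
case: eqP => [->|jp].
  by rewrite tpermL mixL -/d sd opprB addrC subrK.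
case: eqP => [->|jq].
  by rewrite tpermR mixR -/d sd addrA [x 0 q + _]addrC.
rewrite tpermD; first by rewrite mulrBl mul1r subrK.
  by apply/eqP=> e; apply: jp.
by apply/eqP=> e; apply: jq.
Qed.


Lemma l1 (a b c d : rat) : a - c = (a - b) - (c - d) + (b - d).
Proof. by rewrite opprB addrACA subrK addrAC subrr add0r. Qed.

Lemma gap (u v : rat) : u - v \is a Num.int -> v < u -> v + 1 <= u.
Proof.
move=> /intrP[z ez] vu.
have : 0 < u - v by rewrite subr_gt0.
rewrite ez ltr0z gtz0_ge1 -(ler1z rat) -ez.
by rewrite lerBrDl.
Qed.

Lemma coordE n (a : 'I_n -> int) j :
  (\sum_i (a i)%:~R *: e_vec i) 0 j = (a j)%:~R - (\sum_i (a i)%:~R) / n%:R.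
Proof.
rewrite summxE.
under eq_bigr do rewrite !mxE mulrBr.
rewrite big_split /= sumrN; congr (_ - _); last by rewrite mulr_suml.
rewrite (bigD1 j) //= eqxx mulr1 big1 ?addr0 // => i /negbTE ->.
by rewrite mulr0.
Qed.

Lemma lam_intdiff n (lam : 'rV[rat]_n) i j :
  char_lattice lam -> lam 0 i - lam 0 j \is a Num.int.
Proof.
case=> a ->; rewrite !coordE opprB addrA subrK.
by rewrite rpredB // intr_int.
Qed.

Lemma hullc_sum n (lam x : 'rV[rat]_n) :
  hullc lam x -> \sum_j x 0 j = \sum_j lam 0 j.
Proof.
case=> t [t0 t1 tx].
under eq_bigr do rewrite tx.
rewrite exchange_big /=.
have e : forall s : 'S_n, \sum_j lam 0 ((s^-1)%g j) = \sum_j lam 0 j.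
  move=> s; rewrite (reindex_inj (@perm_inj _ s)) /=.
  by apply: eq_bigr => j _; rewrite -permM mulgV perm1.
under eq_bigr do rewrite -mulr_sumr e.
by rewrite -mulr_suml t1 mul1r.
Qed.

Definition Inv n (lam x : 'rV[rat]_n) :=
  hullc lam x /\ forall i, x 0 i - lam 0 i \is a Num.int.

Lemma Inv_lam n (lam : 'rV[rat]_n) : Inv lam lam.
Proof. by split; [apply: hullc_lam | move=> i; rewrite subrr rpred0]. Qed.

Lemma Inv_diff n (lam x : 'rV[rat]_n) i j :
  char_lattice lam -> Inv lam x -> x 0 i - x 0 j \is a Num.int.
Proof.
move=> cl [_ h].
have -> : x 0 i - x 0 j = (x 0 i - lam 0 i) - (x 0 j - lam 0 j) + (lam 0 i - lam 0 j).
  by rewrite opprB addrACA subrK addrAC subrr add0r.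
apply: rpredD; first apply: rpredB; [exact: h | exact: h | exact: lam_intdiff].
Qed.

Lemma Inv_M n (lam x : 'rV[rat]_n) : Inv lam x -> M_set lam x.
Proof.
case=> hx hi; split; first exact: hullc_conv.
have hz : forall i, exists z : int, x 0 i - lam 0 i == z%:~R.
  by move=> i; case/intrP: (hi i) => z ez; exists z; rewrite ez.
pose a := fun i => xchoose (hz i).
have ea : forall i, x 0 i - lam 0 i = (a i)%:~R by move=> i; exact/eqP/(xchooseP (hz i)).
have s0 : \sum_i a i = 0.
  apply: (@intr_inj rat); rewrite rmorph_sum /=.
  under eq_bigr do rewrite -ea.
  by rewrite sumrB (hullc_sum hx) subrr.
exists a; split; first by rewrite s0 dvdz0.
apply/rowP=> j; rewrite coordE !mxE -ea.
by rewrite -rmorph_sum /= s0 mul0r subr0.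
Qed.

Lemma l2 (u v w : rat) : u - w = (u - v) + (v - w).
Proof. by rewrite addrA subrK. Qed.

Lemma step n (lam x : 'rV[rat]_n) p q c c2 :
  Inv lam x -> p != q -> x 0 q <= c <= x 0 p -> c - x 0 p \is a Num.int ->
  c + c2 = x 0 p + x 0 q ->
  exists y, [/\ Inv lam y, y 0 p = c, y 0 q = c2 &
     forall j, j != p -> j != q -> y 0 j = x 0 j].
Proof.
move=> [hx hi] pq hc ci e.
have ec2 : c2 = x 0 p + x 0 q - c by rewrite -e addrC addKr.
have yq : (upd x p q c) 0 q = c2 by rewrite mxE eq_sym (negbTE pq) eqxx ec2.
have yp : (upd x p q c) 0 p = c by rewrite mxE eqxx.
exists (upd x p q c); split=> //.
- split; first exact: hullc_upd.
  move=> j; have [->|jp] := eqVneq j p.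
    by rewrite yp (l2 _ (x 0 p)) rpredD.
  have [->|jq] := eqVneq j q.
    rewrite yq (l2 _ (x 0 q)) rpredD // ec2 addrAC addrK -opprB.
    by rewrite rpredN.
  by rewrite mxE (negbTE jp) (negbTE jq).
- by move=> j jp jq; rewrite mxE (negbTE jp) (negbTE jq).
Qed.

Lemma eq_from (a b e1 e2 : rat) : a - b = e1 - e2 -> e1 = e2 -> a = b.
Proof. by move=> h e; apply: subr0_eq; rewrite h e subrr. Qed.
Lemma le_from (a b d : rat) : b - a = d -> 0 <= d -> a <= b.
Proof. by move=> h d0; rewrite -subr_ge0 h. Qed.
Lemma z_from (u e : rat) : u = e -> e \is a Num.int -> u \is a Num.int.
Proof. by move=> ->. Qed.

Definition Concl n (lam : 'rV[rat]_n) := exists x : 'rV[rat]_n, M_set lam x /\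
    exists i j k : 'I_n, [/\ i != j, j != k & i != k] /\
      exists alpha : rat,
        [/\ x 0 i = alpha + 1, x 0 j = alpha & x 0 k = alpha - 1].

Lemma concl_of n (lam y : 'rV[rat]_n) i j k al :
  Inv lam y -> i != j -> j != k -> i != k ->
  y 0 i = al + 1 -> y 0 j = al -> y 0 k = al - 1 -> Concl lam.
Proof.
move=> hy ij jk ik e1 e2 e3; exists y; split; first exact: Inv_M.
by exists i, j, k; split=> //; exists al.
Qed.

Lemma T0 n (lam x : 'rV[rat]_n) p q r al :
  char_lattice lam -> Inv lam x -> p != q -> q != r -> p != r ->
  x 0 r <= x 0 q -> x 0 q <= x 0 p -> x 0 r < x 0 p ->
  x 0 p + x 0 q + x 0 r = al + al + al -> al - x 0 p \is a Num.int ->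
  Concl lam.
Proof.
move=> cl hx pq qr pr hrq hqp hrp hs hp.
have hr : al - x 0 r \is a Num.int.
  by rewrite (l2 _ (x 0 p)) rpredD //; exact: (Inv_diff _ _ cl hx).
have ap : al < x 0 p.
  rewrite ltNge; apply/negP => h.
  have : x 0 p + x 0 q + x 0 r < al + al + al.
    by apply: ler_ltD; [apply: lerD => //; exact: le_trans hqp h | exact: lt_le_trans hrp h].
  by rewrite hs ltxx.
have ra : x 0 r < al.
  rewrite ltNge; apply/negP => h.
  have : al + al + al < x 0 p + x 0 q + x 0 r.
    apply: ltr_leD; first apply: ltr_leD => //.
      exact: le_trans hrq.
    by [].
  by rewrite hs ltxx.
have a1 : al + 1 <= x 0 p.
  by apply: gap => //; rewrite -opprB rpredN.
have r1 : x 0 r + 1 <= al by apply: gap.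
set c := x 0 p + x 0 r - al + 1.
have cpZ : c - x 0 p \is a Num.int.
  apply: (z_from (e := - (al - x 0 r) + 1)); first by rewrite /c; rring.
  by rewrite rpredD ?rpredN.
have [y1 [hy1 y1p y1r y1o]] : exists y, [/\ Inv lam y, y 0 p = c, y 0 r = al - 1 &
     forall j, j != p -> j != r -> y 0 j = x 0 j].
  apply: step => //.
  - apply/andP; split.
      apply: (le_from (d := (x 0 p - (al + 1)) + (1 + 1))); first by rewrite /c; rring.
      by rewrite addr_ge0 // subr_ge0.
    apply: (le_from (d := al - (x 0 r + 1))); first by rewrite /c; rring.
    by rewrite subr_ge0.
  - by rewrite /c; rring.
have y1q : y1 0 q = x 0 q by apply: y1o; rewrite // eq_sym.
have sum2 : c + x 0 q = al + 1 + al.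
  apply: (eq_from (e1 := x 0 p + x 0 q + x 0 r) (e2 := al + al + al)) => //.
  by rewrite /c; rring.
have caZ : c - al \is a Num.int.
  apply: (z_from (e := (c - x 0 p) - (al - x 0 p))); first by rring.
  by rewrite rpredB.
have [ca|ca] := leP (al + 1) c.
  have [y2 [hy2 y2p y2q y2o]] : exists y, [/\ Inv lam y, y 0 p = al + 1, y 0 q = al &
     forall j, j != p -> j != q -> y 0 j = y1 0 j].
    apply: step => //.
    - rewrite y1p y1q ca andbT.
      apply: (le_from (d := (c - (al + 1)) + 1)).
        apply: (eq_from (e1 := al + 1 + al) (e2 := c + x 0 q)); [rring | by rewrite sum2].
      by rewrite addr_ge0 // subr_ge0.
    - rewrite y1p; apply: (z_from (e := 1 - (c - al))); first by rring.
      by rewrite rpredB.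
    - by rewrite y1p y1q sum2.
  apply: (concl_of hy2 pq qr pr y2p y2q).
  by rewrite y2o ?y1r // eq_sym.
have cal : c <= al.
  rewrite -(lerD2r 1); apply: gap; last exact: ca.
  by apply: (z_from (e := 1 - (c - al))); [rring | rewrite rpredB].
have [y2 [hy2 y2q y2p y2o]] : exists y, [/\ Inv lam y, y 0 q = al + 1, y 0 p = al &
     forall j, j != q -> j != p -> y 0 j = y1 0 j].
  apply: step => //.
  - by rewrite eq_sym.
  - rewrite y1p y1q (ltW ca) /=.
    apply: (le_from (d := al - c)).
      apply: (eq_from (e1 := c + x 0 q) (e2 := al + 1 + al)) => //; rring.
    by rewrite subr_ge0.
  - rewrite y1q; apply: (z_from (e := (x 0 p - x 0 q) + (al - x 0 p) + 1)); first by rring.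
    apply: rpredD; last exact: rpred1. apply: rpredD => //; exact: (Inv_diff _ _ cl hx).
  - by rewrite y1p y1q [x 0 q + _]addrC sum2.
apply: (concl_of hy2 _ pr qr y2q y2p); first by rewrite eq_sym.
by rewrite y2o ?y1r // eq_sym.
Qed.

Lemma T1lt n (lam x : 'rV[rat]_n) p q r al :
  char_lattice lam -> Inv lam x -> p != q -> q != r -> p != r ->
  x 0 q < x 0 r ->
  x 0 p + x 0 q + x 0 r = al + al + al -> (forall i, al - x 0 i \is a Num.int) ->
  Concl lam.
Proof.
move=> cl hx pq qr pr lqr hs hz.
have [apq|bpa] := leP (x 0 p) (x 0 q).
  apply: (T0 (p:=r) (q:=q) (r:=p) (al:=al) cl hx).
  all: try done; try (by rewrite eq_sym); try (by rewrite -hs; rring).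
  - exact: ltW.
  - exact: le_lt_trans apq lqr.
have [apr|cpa] := leP (x 0 p) (x 0 r).
  apply: (T0 (p:=r) (q:=p) (r:=q) (al:=al) cl hx).
  all: try done; try (by rewrite eq_sym); try (by rewrite -hs; rring).
  - exact: ltW.
apply: (T0 (p:=p) (q:=r) (r:=q) (al:=al) cl hx).
all: try done; try (by rewrite eq_sym); try (by rewrite -hs; rring).
all: try exact: ltW.
all: try exact: lt_trans lqr cpa.
Qed.

Lemma T1 n (lam x : 'rV[rat]_n) p q r al :
  char_lattice lam -> Inv lam x -> p != q -> q != r -> p != r ->
  x 0 q != x 0 r ->
  x 0 p + x 0 q + x 0 r = al + al + al -> al - x 0 p \is a Num.int ->
  Concl lam.
Proof.
move=> cl hx pq qr pr nqr hs hp.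
have hz : forall i, al - x 0 i \is a Num.int.
  by move=> i; rewrite (l2 _ (x 0 p)) rpredD //; exact: (Inv_diff _ _ cl hx).
have [lqr|lrq|e] := ltgtP (x 0 q) (x 0 r).
- exact: (T1lt cl hx pq qr pr lqr hs hz).
- apply: (T1lt (p:=p) (q:=r) (r:=q) cl hx pr _ pq lrq _ hz); first by rewrite eq_sym.
  by rewrite -hs; rring.
- by rewrite e eqxx in nqr.
Qed.

Lemma Mv n (lam x : 'rV[rat]_n) p q r w al c :
  char_lattice lam -> Inv lam x -> p != q -> q != r -> p != r ->
  w != p -> w != q -> w != r -> x 0 q != x 0 r ->
  (x 0 w <= c <= x 0 p) \/ (x 0 p <= c <= x 0 w) ->
  c - x 0 p \is a Num.int -> al - c \is a Num.int ->
  c + x 0 q + x 0 r = al + al + al -> Concl lam.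
Proof.
move=> cl hx pq qr pr wp wq wr nqr hb hc hal hs.
have [y [hy yp yq yr]] : exists y, [/\ Inv lam y, y 0 p = c, y 0 q = x 0 q & y 0 r = x 0 r].
  case: hb => hb.
    have pw : p != w by rewrite eq_sym.
    have sm : c + (x 0 p + x 0 w - c) = x 0 p + x 0 w by rring.
    have [y [hy yp yw yo]] := @step n lam x p w c _ hx pw hb hc sm.
    by exists y; split => //; apply: yo; rewrite // eq_sym.
  have hb' : x 0 p <= x 0 w + x 0 p - c <= x 0 w.
    case/andP: hb => h1 h2; apply/andP; split.
      by apply: (le_from (d := x 0 w - c)); [rring | rewrite subr_ge0].
    by apply: (le_from (d := c - x 0 p)); [rring | rewrite subr_ge0].
  have hc' : x 0 w + x 0 p - c - x 0 w \is a Num.int.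
    by apply: (z_from (e := - (c - x 0 p))); [rring | rewrite rpredN].
  have sm : x 0 w + x 0 p - c + c = x 0 w + x 0 p by rring.
  have [y [hy yw yp yo]] := @step n lam x w p _ c hx wp hb' hc' sm.
  by exists y; split => //; apply: yo; rewrite // eq_sym.
apply: (T1 (p := p) (q := q) (r := r) (al := al) cl hy) => //.
- by rewrite yq yr.
- by rewrite yp yq yr.
- by rewrite yp.
Qed.

Lemma Mv_any n (lam x : 'rV[rat]_n) i j k w u al c :
  char_lattice lam -> Inv lam x -> i != j -> j != k -> i != k ->
  w != i -> w != j -> w != k ->
  x 0 i != x 0 j -> x 0 j != x 0 k -> x 0 i != x 0 k ->
  [\/ u = i, u = j | u = k] ->
  (x 0 w <= c <= x 0 u) \/ (x 0 u <= c <= x 0 w) ->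
  c - x 0 u \is a Num.int -> (forall t, al - x 0 t \is a Num.int) ->
  x 0 i + x 0 j + x 0 k - x 0 u + c = al + al + al -> Concl lam.
Proof.
move=> cl hx ij jk ik wi wj wk nij njk nik hu hb hc hz hs.
have hal : al - c \is a Num.int.
  by apply: (z_from (e := (al - x 0 u) - (c - x 0 u))); [rring | rewrite rpredB].
case: hu => eu; subst u.
- by apply: (Mv cl hx ij jk ik wi wj wk njk hb hc hal); rewrite -hs; rring.
- apply: (Mv (q := i) (r := k) cl hx _ ik jk wj wi wk nik hb hc hal).
    by rewrite eq_sym.
  by rewrite -hs; rring.
- apply: (Mv (q := i) (r := j) cl hx _ ij _ wk wi wj nij hb hc hal).
  + by rewrite eq_sym.
  + by rewrite eq_sym.
  by rewrite -hs; rring.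
Qed.

Lemma two_vals (V u : rat) : u - V \is a Num.int ->
  ~~ (V <= u - 1) -> ~~ (u <= V - (1 + 1)) -> u = V - 1 \/ u = V.
Proof.
move=> hz; rewrite -!ltNge => h1 h2.
have uV : u <= V.
  rewrite -(lerD2r 1); apply: gap.
    by apply: (z_from (e := 1 - (u - V))); [rring | rewrite rpredB].
  by rewrite -ltrBlDr.
have Vu : V - 1 <= u.
  have := gap (u := u) (v := V - (1 + 1)).
  have -> : V - (1 + 1) + 1 = V - 1 by rring.
  apply => //.
  apply: (z_from (e := (u - V) + 1 + 1)); first by rring.
  by apply: rpredD; [apply: rpredD; [exact: hz | exact: rpred1] | exact: rpred1].
have [lt|ge] := ltP u V.
  left; apply/eqP; rewrite eq_le Vu andbT.
  have := gap (u := V) (v := u); rewrite -lerBrDr.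
  apply => //.
  by apply: (z_from (e := - (u - V))); [rring | rewrite rpredN].
by right; apply/eqP; rewrite eq_le uV ge.
Qed.

Lemma pigeon (V a b c : rat) :
  a != b -> b != c -> a != c ->
  (a = V - 1 \/ a = V) -> (b = V - 1 \/ b = V) -> (c = V - 1 \/ c = V) -> False.
Proof.
move=> ab bc ac ha hb hc; move: ab bc ac.
case: ha => ->; case: hb => ->; case: hc => ->; by rewrite !eqxx.
Qed.

Lemma find_u (V a b c : rat) : a != b -> b != c -> a != c ->
  a - V \is a Num.int -> b - V \is a Num.int -> c - V \is a Num.int ->
  [|| (V <= a - 1) || (a <= V - (1 + 1)), (V <= b - 1) || (b <= V - (1 + 1))
    | (V <= c - 1) || (c <= V - (1 + 1))].
Proof.
move=> ab bc ac za zb zc; apply/idPn; rewrite !negb_or.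
move=> /andP[/andP[a1 a2] /andP[/andP[b1 b2] /andP[c1 c2]]].
exact: (pigeon ab bc ac (two_vals za a1 a2) (two_vals zb b1 b2) (two_vals zc c1 c2)).
Qed.

Lemma Case1 n (lam x : 'rV[rat]_n) i j k w u A :
  char_lattice lam -> Inv lam x -> i != j -> j != k -> i != k ->
  w != i -> w != j -> w != k ->
  x 0 i != x 0 j -> x 0 j != x 0 k -> x 0 i != x 0 k ->
  (forall t, A - x 0 t \is a Num.int) ->
  x 0 i + x 0 j + x 0 k = A + A + A + 1 ->
  [\/ u = i, u = j | u = k] ->
  (x 0 w <= x 0 u - 1) || (x 0 u <= x 0 w - (1 + 1)) -> Concl lam.
Proof.
move=> cl hx ij jk ik wi wj wk nij njk nik hz hs hu /orP[h|h].
- apply: (Mv_any (c := x 0 u - 1) (al := A) cl hx ij jk ik wi wj wk nij njk nik hu).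
  + left; rewrite h /=.
    by apply: (le_from (d := 1)); [rring | rewrite ler01].
  + by apply: (z_from (e := - 1)); [rring | rewrite rpredN rpred1].
  + exact: hz.
  + apply: (eq_from (e1 := x 0 i + x 0 j + x 0 k) (e2 := A + A + A + 1)) => //; rring.
- apply: (Mv_any (c := x 0 u + 1 + 1) (al := A + 1) cl hx ij jk ik wi wj wk nij njk nik hu).
  + right; apply/andP; split.
      by apply: (le_from (d := 1 + 1)); [rring | rewrite addr_ge0 ?ler01].
    by apply: (le_from (d := x 0 w - (1 + 1) - x 0 u)); [rring | rewrite subr_ge0].
  + by apply: (z_from (e := 1 + 1)); [rring | rewrite rpredD ?rpred1].
  + by move=> t; apply: (z_from (e := (A - x 0 t) + 1)); [rring | rewrite rpredD ?rpred1].
  + apply: (eq_from (e1 := x 0 i + x 0 j + x 0 k) (e2 := A + A + A + 1)) => //; rring.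
Qed.

Lemma Case2 n (lam x : 'rV[rat]_n) i j k w u A :
  char_lattice lam -> Inv lam x -> i != j -> j != k -> i != k ->
  w != i -> w != j -> w != k ->
  x 0 i != x 0 j -> x 0 j != x 0 k -> x 0 i != x 0 k ->
  (forall t, A - x 0 t \is a Num.int) ->
  x 0 i + x 0 j + x 0 k = A + A + A + 1 + 1 ->
  [\/ u = i, u = j | u = k] ->
  (x 0 w + 1 <= x 0 u - 1) || (x 0 u <= x 0 w + 1 - (1 + 1)) -> Concl lam.
Proof.
move=> cl hx ij jk ik wi wj wk nij njk nik hz hs hu /orP[h|h].
- apply: (Mv_any (c := x 0 u - 1 - 1) (al := A) cl hx ij jk ik wi wj wk nij njk nik hu).
  + left; apply/andP; split.
      by apply: (le_from (d := x 0 u - 1 - (x 0 w + 1))); [rring | rewrite subr_ge0].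
    by apply: (le_from (d := 1 + 1)); [rring | rewrite addr_ge0 ?ler01].
  + by apply: (z_from (e := - (1 + 1))); [rring | rewrite rpredN rpredD ?rpred1].
  + exact: hz.
  + apply: (eq_from (e1 := x 0 i + x 0 j + x 0 k) (e2 := A + A + A + 1 + 1)) => //; rring.
- apply: (Mv_any (c := x 0 u + 1) (al := A + 1) cl hx ij jk ik wi wj wk nij njk nik hu).
  + right; apply/andP; split.
      by apply: (le_from (d := 1)); [rring | rewrite ler01].
    by apply: (le_from (d := x 0 w + 1 - (1 + 1) - x 0 u)); [rring | rewrite subr_ge0].
  + by apply: (z_from (e := 1)); [rring | rewrite rpred1].
  + by move=> t; apply: (z_from (e := (A - x 0 t) + 1)); [rring | rewrite rpredD ?rpred1].
  + apply: (eq_from (e1 := x 0 i + x 0 j + x 0 k) (e2 := A + A + A + 1 + 1)) => //; rring.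
Qed.

Lemma dec (dd : int) : exists q : int, [\/ dd = q + q + q, dd = q + q + q + 1 | dd = q + q + q + 1 + 1].
Proof.
exists (dd %/ 3)%Z.
have h0 := modz_ge0 dd (d := 3) isT.
have h3 := ltz_pmod dd (d := 3) isT.
have hd := divz_eq dd 3.
move: h0 h3 hd; set q := (dd %/ 3)%Z; set r := (dd %% 3)%Z.
have -> : q * 3 = q + q + q by rewrite (_ : (3 : int) = 1 + 1 + 1) // !mulrDr mulr1.
case: r => [m|m] // _.
case: m => [|[|[|m]]] // _ ->; rewrite ?addr0.
- by constructor 1.
- by constructor 2.
- by constructor 3; rewrite -[RHS]addrA.
Qed.
Lemma wex n (i j k : 'I_n) : (4 <= n)%N -> exists w : 'I_n, [&& w != i, w != j & w != k].
Proof.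
move=> n4.
case: (pickP (fun w : 'I_n => [&& w != i, w != j & w != k])) => [w hw|none]; first by exists w.
exfalso.
have sub : predT \subset (mem [:: i; j; k]).
  apply/subsetP => t _; move: (none t); rewrite !inE.
  by case: (t == i); case: (t == j); case: (t == k).
have := subset_leq_card sub.
have := card_size [:: i; j; k].
rewrite cardT size_enum_ord /= => h1 h2.
have := leq_trans h2 h1.
by case: n n4 {none sub h1 h2 i j k} => [|[|[|[|]]]].
Qed.

Theorem lemma9 (n : nat) (lam : 'rV[rat]_n) :
  (4 <= n)%N ->
  char_lattice lam ->
  dominant lam ->
  (forall i : 'I_n, lam 0 i \isn't a Num.int) ->
  (exists i j k : 'I_n,
      [/\ lam 0 i != lam 0 j, lam 0 j != lam 0 k & lam 0 i != lam 0 k]) ->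
  exists x : 'rV[rat]_n, M_set lam x /\
    exists i j k : 'I_n, [/\ i != j, j != k & i != k] /\
      exists alpha : rat,
        [/\ x 0 i = alpha + 1, x 0 j = alpha & x 0 k = alpha - 1].
Proof.
move=> n4 cl _ _ [i [j [k [nij njk nik]]]].
have ij : i != j by apply: contraNneq nij => ->.
have jk : j != k by apply: contraNneq njk => ->.
have ik : i != k by apply: contraNneq nik => ->.
have [w /and3P[wi wj wk]] := wex i j k n4.
have hx := Inv_lam lam.
have [dd edd] : exists dd : int, (lam 0 j - lam 0 i) + (lam 0 k - lam 0 i) = dd%:~R.
  by apply/intrP; rewrite rpredD //; exact: lam_intdiff.
have [q hq] := dec dd.
pose A := lam 0 i + q%:~R.
have hz : forall t, A - lam 0 t \is a Num.int.
  move=> t; apply: (z_from (e := (lam 0 i - lam 0 t) + q%:~R)); first by rewrite /A; rring.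
  by rewrite rpredD ?intr_int //; exact: lam_intdiff.
have zw : forall t, lam 0 t - lam 0 w \is a Num.int by move=> t; exact: lam_intdiff.
have zw1 : forall t, lam 0 t - (lam 0 w + 1) \is a Num.int.
  move=> t; apply: (z_from (e := (lam 0 t - lam 0 w) - 1)); first by rring.
  by rewrite rpredB ?rpred1.
case: hq => hd.
- apply: (T1 (p := i) (q := j) (r := k) (al := A) cl hx ij jk ik njk); last exact: hz.
  apply: (eq_from (e1 := (lam 0 j - lam 0 i) + (lam 0 k - lam 0 i))
                  (e2 := q%:~R + q%:~R + q%:~R)); first by rewrite /A; rring.
  by rewrite edd hd !intrD.
- have hs : lam 0 i + lam 0 j + lam 0 k = A + A + A + 1.
    apply: (eq_from (e1 := (lam 0 j - lam 0 i) + (lam 0 k - lam 0 i))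
                    (e2 := q%:~R + q%:~R + q%:~R + 1)); first by rewrite /A; rring.
    by rewrite edd hd !intrD rmorph1.
  case/or3P: (find_u nij njk nik (zw i) (zw j) (zw k)) => h.
  + by apply: (Case1 (u := i) cl hx ij jk ik wi wj wk nij njk nik hz hs _ h); constructor 1.
  + by apply: (Case1 (u := j) cl hx ij jk ik wi wj wk nij njk nik hz hs _ h); constructor 2.
  + by apply: (Case1 (u := k) cl hx ij jk ik wi wj wk nij njk nik hz hs _ h); constructor 3.
- have hs : lam 0 i + lam 0 j + lam 0 k = A + A + A + 1 + 1.
    apply: (eq_from (e1 := (lam 0 j - lam 0 i) + (lam 0 k - lam 0 i))
                    (e2 := q%:~R + q%:~R + q%:~R + 1 + 1)); first by rewrite /A; rring.
    by rewrite edd hd !intrD rmorph1.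
  case/or3P: (find_u nij njk nik (zw1 i) (zw1 j) (zw1 k)) => h.
  + by apply: (Case2 (u := i) cl hx ij jk ik wi wj wk nij njk nik hz hs _ h); constructor 1.
  + by apply: (Case2 (u := j) cl hx ij jk ik wi wj wk nij njk nik hz hs _ h); constructor 2.
  + by apply: (Case2 (u := k) cl hx ij jk ik wi wj wk nij njk nik hz hs _ h); constructor 3.
Qed.
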